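(* Let $T$ be a complete first-order theory with monster model $\mathcal{U}$, $A\subseteq\mathcal{U}$ small, $\mu\in\mathfrak{M}_x(\mathcal{U})$, and $f:\mathcal{U}^x\to\mathcal{U}^y$ an $A$-definable function. Then $\mu\geq_{\mathbb{E},A} f(\mu)$.
   Context: For $B\subseteq\mathcal{U}$, $\mathcal{L}_x(B)$ is the Boolean algebra of formulas in $x$ with parameters from $B$ modulo $T$, identified with a subalgebra of $\mathcal{L}_{xy}(B)$ via $\varphi(x)\mapsto\varphi(x)\wedge y=y$; $\mathfrak{M}_x(B)$ is the set of finitely additive probability measures (Keisler measures) on $\mathcal{L}_x(B)$. For $\omega\in\mathfrak{M}_{xy}(B)$, $\pi_x(\omega)(\varphi(x))=\omega(\varphi(x)\wedge y=y)$ (similarly $\pi_y$); $\omega|_C$ is restriction to $\mathcal{L}_{xy}(C)$. The push-forward $f(\mu)\in\mathfrak{M}_y(\mathcal{U})$ is $f(\mu)(\psi(y))=\mu(\psi(f(x)))$. For $\mu\in\mathfrak{M}_x(\mathcal{U})$, $\nu\in\mathfrak{M}_y(\mathcal{U})$ ($x,y$ disjoint) and small $A$: $\mu\geq_{\mathbb{E},A}\nu$ means there is $\lambda\in\mathfrak{M}_{xy}(A)$ with $\pi_x(\lambda)=\mu|_A$ such that every $\omega\in\mathfrak{M}_{xy}(\mathcal{U})$ with $\omega|_A=\lambda$ and $\pi_x(\omega)=\mu$ satisfies $\pi_y(\omega)=\nu$. *)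

(* Defs.v *)
From Stdlib Require Import Reals List.
From Stdlib Require Fin.
Import ListNotations.
Open Scope R_scope.

Record signature := {
  Fsym : Type;
  Rsym : Type;
  far : Fsym -> nat;
  rar : Rsym -> nat
}.

Record structure (L : signature) := {
  dom :> Type;
  funs : forall f : Fsym L, (Fin.t (far L f) -> dom) -> dom;
  rels : forall r : Rsym L, (Fin.t (rar L r) -> dom) -> Prop
}.
Arguments funs {L} _ _ _.
Arguments rels {L} _ _ _.

Section Syntax.
Variable L : signature.
Variable P : Type. (* type of parameters (elements of the model) *)

Inductive term :=
| Var : nat -> term
| Par : P -> term
| App : forall f : Fsym L, (Fin.t (far L f) -> term) -> term.

Inductive formula :=
| Top : formula
| Bot : formula
| Eq : term -> term -> formula
| Rel : forall r : Rsym L, (Fin.t (rar L r) -> term) -> formula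
| Not : formula -> formula
| And : formula -> formula -> formula
| Or : formula -> formula -> formula
| Ex : nat -> formula -> formula.

Fixpoint term_vars_in (V : nat -> Prop) (t : term) : Prop :=
  match t with
  | Var v => V v
  | Par _ => True
  | App f args => forall i, term_vars_in V (args i)
  end.

Fixpoint term_params_in (B : P -> Prop) (t : term) : Prop :=
  match t with
  | Var _ => True
  | Par a => B a
  | App f args => forall i, term_params_in B (args i)
  end.

Fixpoint vars_in (V : nat -> Prop) (phi : formula) : Prop :=
  match phi with
  | Top | Bot => True
  | Eq t u => term_vars_in V t /\ term_vars_in V u
  | Rel r args => forall i, term_vars_in V (args i)
  | Not p => vars_in V p
  | And p q | Or p q => vars_in V p /\ vars_in V q
  | Ex v p => vars_in (fun w => w = v \/ V w) p
  end.

Fixpoint params_in (B : P -> Prop) (phi : formula) : Prop :=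
  match phi with
  | Top | Bot => True
  | Eq t u => term_params_in B t /\ term_params_in B u
  | Rel r args => forall i, term_params_in B (args i)
  | Not p => params_in B p
  | And p q | Or p q => params_in B p /\ params_in B q
  | Ex _ p => params_in B p
  end.

(* x = x for every variable of the tuple y, i.e. the formula "y = y" *)
Definition eqs (y : list nat) : formula :=
  fold_right (fun v phi => And (Eq (Var v) (Var v)) phi) Top y.

Definition exs (y : list nat) (phi : formula) : formula :=
  fold_right Ex phi y.

End Syntax.

Arguments Var {L P} _.
Arguments Par {L P} _.
Arguments App {L P} _ _.
Arguments Top {L P}.
Arguments Bot {L P}.
Arguments Eq {L P} _ _.
Arguments Rel {L P} _ _.
Arguments Not {L P} _.
Arguments And {L P} _ _.
Arguments Or {L P} _ _.
Arguments Ex {L P} _ _.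
Arguments vars_in {L P} _ _.
Arguments params_in {L P} _ _.
Arguments eqs {L P} _.
Arguments exs {L P} _ _.

Section Semantics.
Variable L : signature.
Variable M : structure L.

Definition upd (s : nat -> M) (v : nat) (a : M) : nat -> M :=
  fun w => if Nat.eqb w v then a else s w.

Fixpoint eval (s : nat -> M) (t : term L M) : M :=
  match t with
  | Var v => s v
  | Par a => a
  | App f args => funs M f (fun i => eval s (args i))
  end.

Fixpoint sat (s : nat -> M) (phi : formula L M) : Prop :=
  match phi with
  | Top => True
  | Bot => False
  | Eq t u => eval s t = eval s u
  | Rel r args => rels M r (fun i => eval s (args i))
  | Not p => ~ sat s p
  | And p q => sat s p /\ sat s q
  | Or p q => sat s p \/ sat s q
  | Ex v p => exists a : M, sat (upd s v a) p
  end.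

Definition inL (x : list nat) (B : M -> Prop) (phi : formula L M) : Prop :=
  vars_in (fun v => In v x) phi /\ params_in B phi.

(* equivalence modulo T = Th(U, U): equivalence in the model U *)
Definition equivU (phi psi : formula L M) : Prop :=
  forall s, sat s phi <-> sat s psi.

(* mu (a function on formulas) is a Keisler measure on L_x(B), i.e.
   a finitely additive probability measure on the Lindenbaum algebra. *)
Definition keisler (x : list nat) (B : M -> Prop)
    (mu : formula L M -> R) : Prop :=
  (forall phi psi, inL x B phi -> inL x B psi -> equivU phi psi ->
      mu phi = mu psi) /\
  (forall phi, inL x B phi -> 0 <= mu phi) /\
  mu Top = 1 /\
  (forall phi psi, inL x B phi -> inL x B psi ->
      (forall s, ~ (sat s phi /\ sat s psi)) ->
      mu (Or phi psi) = mu phi + mu psi).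

Definition allU : M -> Prop := fun _ => True.

Definition pi_x (y : list nat) (omega : formula L M -> R) (phi : formula L M) : R :=
  omega (And phi (eqs y)).

Definition geE (x y : list nat) (A : M -> Prop)
    (mu nu : formula L M -> R) : Prop :=
  exists lam : formula L M -> R,
    keisler (x ++ y) A lam /\
    (forall phi, inL x A phi -> pi_x y lam phi = mu phi) /\
    forall omega : formula L M -> R,
      keisler (x ++ y) allU omega ->
      (forall chi, inL (x ++ y) A chi -> omega chi = lam chi) ->
      (forall phi, inL x allU phi -> pi_x y omega phi = mu phi) ->
      forall psi, inL y allU psi -> pi_x x omega psi = nu psi.

(* theta(x,y) (with parameters in A) defines the function f : U^x -> U^y,
   tuples being represented as lists of the values of the variables. *)
Definition defines_fun (x y : list nat) (A : M -> Prop)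
    (f : list M -> list M) (theta : formula L M) : Prop :=
  inL (x ++ y) A theta /\
  (forall a : list M, length a = length x -> length (f a) = length y) /\
  forall s : nat -> M, sat s theta <-> map s y = f (map s x).

(* push-forward: f(mu)(psi(y)) = mu(psi(f(x))), where psi(f(x)) is
   the formula  exists y (theta(x,y) /\ psi(y)). *)
Definition pushforward (y : list nat) (theta : formula L M)
    (mu : formula L M -> R) (psi : formula L M) : R :=
  mu (exs y (And theta psi)).

End Semantics.

Arguments inL {L M} _ _ _.
Arguments keisler {L M} _ _ _.
Arguments allU {L M} _.
Arguments geE {L M} _ _ _ _ _.
Arguments defines_fun {L M} _ _ _ _ _.
Arguments pushforward {L M} _ _ _ _.

(* Main.v *)
Require Import Defs.
From Stdlib Require Import Reals List Lra Arith Classical.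
Import ListNotations.
Open Scope R_scope.

Section Gen.
Variable L : signature.
Variable M : structure L.

Lemma tparams_allU (t : term L M) : term_params_in L M (fun _ => True) t.
Proof. induction t; simpl; auto. Qed.

Lemma params_allU (phi : formula L M) : params_in (fun _ => True) phi.
Proof. induction phi; simpl; auto using tparams_allU. Qed.

Lemma tvars_mono (t : term L M) (V V' : nat -> Prop) :
  (forall v, V v -> V' v) -> term_vars_in L M V t -> term_vars_in L M V' t.
Proof. induction t; simpl; eauto. Qed.

Lemma vars_mono (phi : formula L M) : forall (V V' : nat -> Prop),
  (forall v, V v -> V' v) -> vars_in V phi -> vars_in V' phi.
Proof.
  induction phi; simpl; intros V V' H H1; intuition eauto using tvars_mono.
  eapply IHphi; [|exact H1]. simpl. intros w [->|Hw]; auto.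
Qed.

Lemma teval_coinc (t : term L M) (V : nat -> Prop) (s s' : nat -> M) :
  (forall v, V v -> s v = s' v) -> term_vars_in L M V t -> eval L M s t = eval L M s' t.
Proof.
  induction t as [| |f a IH]; simpl; intros Hs Ht; auto.
  f_equal. apply FunctionalExtensionality.functional_extensionality_dep.
  intros i; auto.
Qed.

Lemma coinc (phi : formula L M) : forall (V : nat -> Prop) (s s' : nat -> M),
  (forall v, V v -> s v = s' v) -> vars_in V phi -> (sat L M s phi <-> sat L M s' phi).
Proof.
  induction phi; simpl; intros V s s' H H1.
  - tauto.
  - tauto.
  - destruct H1. rewrite (teval_coinc t V s s'), (teval_coinc t0 V s s'); tauto.
  - assert (E : (fun i => eval L M s (t i)) = (fun i => eval L M s' (t i))).
    { apply FunctionalExtensionality.functional_extensionality_dep.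
      intros i; eauto using teval_coinc. }
    rewrite E; tauto.
  - rewrite (IHphi V s s'); tauto.
  - destruct H1. rewrite (IHphi1 V s s'), (IHphi2 V s s'); tauto.
  - destruct H1. rewrite (IHphi1 V s s'), (IHphi2 V s s'); tauto.
  - assert (Hu : forall a, forall v, (fun w => w = n \/ V w) v ->
       upd L M s n a v = upd L M s' n a v).
    { intros a v [->|Hv]; unfold upd; [rewrite Nat.eqb_refl; auto|].
      destruct (v =? n); auto. }
    split; intros [a Ha]; exists a.
    + apply (IHphi _ _ _ (Hu a) H1); auto.
    + apply (IHphi _ _ _ (Hu a) H1); auto.
Qed.

Lemma eqs_sat s y : sat L M s (eqs y).
Proof. induction y; simpl; auto. Qed.

Lemma eqs_vars (V : nat -> Prop) y : (forall v, In v y -> V v) -> vars_in V (@eqs L M y).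
Proof. induction y; simpl; intros H; auto. Qed.

Lemma exs_sat s y p : sat L M s (exs y p) <->
  exists s', (forall w, ~ In w y -> s' w = s w) /\ sat L M s' p.
Proof.
  revert s; induction y as [|v y IH]; intros s; simpl.
  - split; [intros H; exists s; auto|intros [s' [H1 H2]]].
    replace s with s'; auto. apply FunctionalExtensionality.functional_extensionality; auto.
  - split.
    + intros [a Ha]. apply IH in Ha. destruct Ha as [s' [H1 H2]].
      exists s'; split; auto. intros w Hw. rewrite H1 by tauto. unfold upd.
      destruct (Nat.eqb_spec w v); subst; tauto.
    + intros [s' [H1 H2]]. exists (s' v). apply IH. exists s'; split; auto.
      intros w Hw. unfold upd. destruct (Nat.eqb_spec w v); subst; auto.
      apply H1. simpl; intros [E|E]; [congruence|tauto].
Qed.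

Lemma exs_vars (V : nat -> Prop) y (p : formula L M) :
  vars_in (fun w => In w y \/ V w) p -> vars_in V (exs y p).
Proof.
  revert V; induction y as [|v y IH]; intros V H; simpl in *.
  - eapply vars_mono; [|exact H]. simpl; intros w [[]|]; auto.
  - apply IH. eapply vars_mono; [|exact H]. simpl; intros w [[E|E]|E]; auto.
Qed.

Lemma exs_params (B : M -> Prop) y (p : formula L M) :
  params_in B p -> params_in B (exs y p).
Proof. induction y; simpl; auto. Qed.

Lemma assign (s : nat -> M) y : NoDup y -> forall l, length l = length y ->
  exists s', (forall w, ~ In w y -> s' w = s w) /\ map s' y = l.
Proof.
  induction 1 as [|v y Hv Hnd IH]; intros l Hl.
  - destruct l; [|discriminate]. exists s; auto.
  - destruct l as [|a l]; [discriminate|]. simpl in Hl. injection Hl as Hl.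
    destruct (IH l Hl) as [s'' [H1 H2]].
    exists (upd L M s'' v a). split.
    + intros w Hw. unfold upd. destruct (Nat.eqb_spec w v); subst; [simpl in Hw; tauto|].
      apply H1. simpl in Hw; tauto.
    + simpl. unfold upd at 1. rewrite Nat.eqb_refl. f_equal.
      rewrite <- H2. apply map_ext_in. intros w Hw. unfold upd.
      destruct (Nat.eqb_spec w v); subst; tauto.
Qed.

Lemma map_eq_in (s1 s2 : nat -> M) y : map s1 y = map s2 y -> forall v, In v y -> s1 v = s2 v.
Proof.
  induction y; simpl; intros H v Hv; [tauto|]. injection H as H1 H2.
  destruct Hv; subst; auto.
Qed.

End Gen.

Section Main.
Variable L : signature.
Variable U : structure L.
Variables (A : U -> Prop) (x y : list nat).
Hypothesis Hx : NoDup x.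
Hypothesis Hy : NoDup y.
Hypothesis Hxy : forall v, In v x -> ~ In v y.
Variable f : list U -> list U.
Variable theta : formula L U.
Hypothesis Hf : defines_fun x y A f theta.

Lemma witness (s : nat -> U) : exists s', (forall w, ~ In w y -> s' w = s w) /\ sat L U s' theta.
Proof.
  destruct Hf as [_ [Hlen Hsem]].
  assert (Hl : length (f (map s x)) = length y) by (apply Hlen; apply length_map).
  destruct (assign L U s y Hy _ Hl) as [s' [H1 H2]].
  exists s'; split; auto. apply Hsem. rewrite H2. f_equal.
  apply map_ext_in. intros v Hv. symmetry; apply H1. auto.
Qed.

Lemma unique (s1 s2 : nat -> U) : sat L U s1 theta -> sat L U s2 theta ->
  (forall v, In v x -> s1 v = s2 v) -> forall v, In v (x ++ y) -> s1 v = s2 v.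
Proof.
  destruct Hf as [_ [Hlen Hsem]]. intros T1 T2 E v Hv.
  apply in_app_or in Hv. destruct Hv as [Hv|Hv]; auto.
  apply Hsem in T1; apply Hsem in T2.
  assert (map s1 x = map s2 x) by (apply map_ext_in; auto).
  apply (map_eq_in L U s1 s2 y); congruence.
Qed.

Lemma theta_vars : vars_in (fun v => In v (x ++ y)) theta.
Proof. destruct Hf as [[H _] _]. exact H. Qed.

Lemma exs_theta (s s' : nat -> U) (chi : formula L U) :
  vars_in (fun v => In v (x ++ y)) chi ->
  (forall w, ~ In w y -> s' w = s w) -> sat L U s' theta ->
  (sat L U s (exs y (And theta chi)) <-> sat L U s' chi).
Proof.
  intros Hc E T. rewrite exs_sat. split.
  - intros [s1 [E1 [T1 C1]]].
    apply (coinc L U chi (fun v => In v (x ++ y)) s1 s'); auto.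
    apply unique; auto. intros v Hv. rewrite E, E1; auto.
  - intros C. exists s'. simpl. auto.
Qed.

Lemma vars_app_l (phi : formula L U) : vars_in (fun v => In v x) phi -> vars_in (fun v => In v (x ++ y)) phi.
Proof. apply vars_mono. intros; apply in_or_app; auto. Qed.
Lemma vars_app_r (phi : formula L U) : vars_in (fun v => In v y) phi -> vars_in (fun v => In v (x ++ y)) phi.
Proof. apply vars_mono. intros; apply in_or_app; auto. Qed.

Lemma exs_inL (chi : formula L U) : vars_in (fun v => In v (x ++ y)) chi ->
  inL x allU (exs y (And theta chi)).
Proof.
  intros H. split; [|apply params_allU].
  apply exs_vars. simpl. split; eapply vars_mono; try eassumption; try apply theta_vars.
  all: intros v Hv; apply in_app_or in Hv; tauto.
Qed.

End Main.

Lemma agree_x (L : signature) (U : structure L) (x y : list nat) (Hxy : forall v, In v x -> ~ In v y) (s s' : nat -> U) :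
  (forall w, ~ In w y -> s' w = s w) -> forall v, In v x -> s' v = s v.
Proof. intros E v Hv. apply E. auto. Qed.

Lemma exs_equiv (L : signature) (U : structure L) (A : U -> Prop) x y (Hy : NoDup y) (Hxy : forall v, In v x -> ~ In v y) f theta
  (Hf : defines_fun x y A f theta) (chi phi : formula L U) :
  vars_in (fun v => In v (x ++ y)) chi -> vars_in (fun v => In v x) phi ->
  (forall s, sat L U s theta -> (sat L U s chi <-> sat L U s phi)) ->
  equivU L U (exs y (And theta chi)) phi.
Proof.
  intros Hc Hp H s.
  destruct (witness L U A x y Hy Hxy f theta Hf s) as [s' [E T]].
  rewrite (exs_theta L U A x y Hxy f theta Hf s s' chi Hc E T), (H s' T).
  apply (coinc L U phi (fun v => In v x)); auto.
  all: try (intros v Hv; apply (agree_x L U x y Hxy s s' E v Hv)).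
Qed.

Ltac cltac := intros; simpl in *;
  repeat match goal with |- context [sat ?L ?U ?s ?p] =>
    lazymatch goal with
    | H : sat L U s p |- _ => fail
    | H : ~ sat L U s p |- _ => fail
    | _ => destruct (Classical_Prop.classic (sat L U s p))
    end end; tauto.

Lemma conc_one (L : signature) (U : structure L) (V : list nat) (B : U -> Prop) (omega : formula L U -> R) (th : formula L U) :
  keisler V B omega -> inL V B th -> omega th = 1 ->
  forall phi, inL V B phi -> omega phi = omega (And phi th).
Proof.
  intros [Oi [Onn [O1 Oadd]]] Ht Hone phi Hp.
  destruct Ht as [Ht1 Ht2], Hp as [Hp1 Hp2].
  assert (Hn : omega (Not th) = 0).
  { assert (E : omega Top = omega (Or th (Not th))).
    { apply Oi; repeat split; simpl; auto; cltac. }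
    rewrite Oadd in E by (repeat split; simpl; auto; cltac).
    lra. }
  assert (E1 : omega (Not th) = omega (Or (And phi (Not th)) (And (Not phi) (Not th)))).
  { apply Oi; repeat split; simpl; auto; cltac. }
  rewrite Oadd in E1 by (repeat split; simpl; auto; cltac).
  assert (Z1 := Onn (And phi (Not th)) ltac:(repeat split; simpl; auto)).
  assert (Z2 := Onn (And (Not phi) (Not th)) ltac:(repeat split; simpl; auto)).
  assert (E2 : omega phi = omega (Or (And phi th) (And phi (Not th)))).
  { apply Oi; repeat split; simpl; auto; cltac. }
  rewrite Oadd in E2 by (repeat split; simpl; auto; cltac).
  lra.
Qed.

Theorem proposition3p10 (L : signature) (U : structure L)
  (A : U -> Prop) (x y : list nat)
  (Hx : NoDup x) (Hy : NoDup y) (Hxy : forall v, In v x -> ~ In v y)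
  (mu : formula L U -> R) (Hmu : keisler x allU mu)
  (f : list U -> list U) (theta : formula L U)
  (Hf : defines_fun x y A f theta) :
  geE x y A mu (pushforward y theta mu).
Proof.
  pose proof Hmu as Hmu'.
  destruct Hmu as [Mi [Mnn [M1 Madd]]].
  assert (TV := theta_vars L U A x y f theta Hf).
  assert (EI := exs_inL L U A x y f theta Hf).
  assert (EQ := exs_equiv L U A x y Hy Hxy f theta Hf).
  assert (ET := fun s chi Hc T => exs_theta L U A x y Hxy f theta Hf s s chi Hc (fun _ _ => eq_refl) T).
  assert (EXV : forall chi, vars_in (fun v => In v (x ++ y)) chi ->
     vars_in (fun v => In v x) (exs y (And theta chi))) by (intros; apply EI; auto).
  exists (fun chi => mu (exs y (And theta chi))).
  split; [|split].
  - split; [|split; [|split]].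
    + intros phi psi [Hp _] [Hq _] E. apply Mi; auto.
      intros s. apply EQ; auto. intros s' T. rewrite ET by auto. apply E.
    + intros phi [Hp _]. apply Mnn. auto.
    + simpl. rewrite <- M1. apply Mi; [apply EI; simpl; auto|split; simpl; auto|].
      apply EQ; simpl; auto. intros s T. simpl; tauto.
    + intros phi psi [Hp _] [Hq _] D. simpl.
      rewrite <- Madd; [| apply EI; auto | apply EI; auto |].
      * apply Mi; [apply EI; simpl; auto | split; simpl; split; auto; apply params_allU |].
        apply EQ; simpl; auto. intros s T. rewrite !ET by (simpl; auto). simpl. tauto.
      * intros s [S1 S2].
        destruct (witness L U A x y Hy Hxy f theta Hf s) as [s' [E T]].
        rewrite (exs_theta L U A x y Hxy f theta Hf s s' _ Hp E T) in S1.
        rewrite (exs_theta L U A x y Hxy f theta Hf s s' _ Hq E T) in S2.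
        apply (D s'); auto.
  - intros phi [Hp _]. unfold pi_x.
    apply Mi; [apply EI; simpl; split; [apply vars_app_l; auto|apply eqs_vars; intros; apply in_or_app; auto] | split; [auto|apply params_allU] |].
    apply EQ; auto.
    + simpl. split; [apply vars_app_l; auto|apply eqs_vars; intros; apply in_or_app; auto].
    + intros s T. simpl. pose proof (eqs_sat L U s y). tauto.
  - intros omega Ho Hext Hpi psi [Hpsi _].
    unfold pi_x, pushforward.
    assert (Hth1 : omega theta = 1).
    { rewrite Hext by (destruct Hf as [H _]; exact H).
      rewrite <- M1. apply Mi; [apply EI; simpl; auto|split; simpl; auto|].
      apply EQ; simpl; auto. intros s T. simpl; tauto. }
    set (chi := exs y (And theta psi)).
    assert (Hchi : vars_in (fun v => In v x) chi) by (apply EXV; apply vars_app_r; auto).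
    rewrite <- Hpi by (split; [auto|apply params_allU]). unfold pi_x.
    assert (ThL : inL (x ++ y) allU theta) by (split; [auto|apply params_allU]).
    assert (Hxx : vars_in (fun v => In v (x ++ y)) (@eqs L U x))
      by (apply eqs_vars; intros; apply in_or_app; auto).
    assert (Hyy : vars_in (fun v => In v (x ++ y)) (@eqs L U y))
      by (apply eqs_vars; intros; apply in_or_app; auto).
    rewrite (conc_one L U _ _ omega theta Ho ThL Hth1 (And psi (eqs x)))
      by (split; [simpl; split; [apply vars_app_r; auto|auto]|apply params_allU]).
    rewrite (conc_one L U _ _ omega theta Ho ThL Hth1 (And chi (eqs y)))
      by (split; [simpl; split; [apply vars_app_l; auto|auto]|apply params_allU]).
    destruct Ho as [Oi _].
    apply Oi.
    + split; [simpl; split; [split; [apply vars_app_r; auto|auto]|auto]|apply params_allU].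
    + split; [simpl; split; [split; [apply vars_app_l; auto|auto]|auto]|apply params_allU].
    + intros s. simpl. pose proof (eqs_sat L U s y). pose proof (eqs_sat L U s x).
      unfold chi. split; intros [[H1 H2] H3].
      * repeat split; auto. rewrite (ET s psi (vars_app_r L U x y psi Hpsi) H3). auto.
      * repeat split; auto. rewrite (ET s psi (vars_app_r L U x y psi Hpsi) H3) in H1. auto.
Qed.
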